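(* Let $G$ be a group with identity $\mathbf{1}$, $S\subseteq G$ inverse-closed, and $X=\mathrm{Cay}(G;S)$. Let $\mathcal{A}^0_{\mathbf{1}}(X)$ be the group of colour-preserving automorphisms of $X$ that fix the vertex $\mathbf{1}$, and let \[S^*=\{\, s\in S \mid \text{no nontrivial element of } \mathcal{A}^0_{\mathbf{1}}(X) \text{ fixes } s\,\}.\] If $S^*$ generates $G$, then $X$ is strongly CCA.
   Context: Graphs are simple (possibly infinite). For an inverse-closed subset $S$ of a group $G$, $\mathrm{Cay}(G;S)$ has vertex set $G$ and an edge from $g$ to $gs$ for each $g\in G$, $s\in S$; the edge $g$—$gs$ is coloured $\{s,s^{-1}\}$. A graph automorphism is colour-preserving if it maps every edge to an edge of the same colour, and colour-permuting if whenever two edges have the same colour their images also have the same colour. A map $\varphi\colon G\to G$ is affine if $\varphi(x)=\alpha(gx)$ for some $\alpha\in\mathrm{Aut}(G)$, $g\in G$. $\mathrm{Cay}(G;S)$ is strongly CCA if every colour-permuting automorphism of it is affine. *)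

(* Defs.v *)
Record is_group (G : Type) (mul : G -> G -> G) (one : G) (inv : G -> G) : Prop := {
  grp_assoc : forall x y z, mul x (mul y z) = mul (mul x y) z;
  grp_mul1l : forall x, mul one x = x;
  grp_mul1r : forall x, mul x one = x;
  grp_mulVl : forall x, mul (inv x) x = one;
  grp_mulVr : forall x, mul x (inv x) = one
}.

Section CayleyDefs.
Variables (G : Type) (mul : G -> G -> G) (one : G) (inv : G -> G).

Definition bijective_map (f : G -> G) : Prop :=
  exists g : G -> G, (forall x, g (f x) = x) /\ (forall y, f (g y) = y).

Definition inverse_closed (S : G -> Prop) : Prop := forall s, S s -> S (inv s).

Definition is_subgroup (H : G -> Prop) : Prop :=
  H one /\ (forall x y, H x -> H y -> H (mul x y)) /\ (forall x, H x -> H (inv x)).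

Definition generated_by (A : G -> Prop) (x : G) : Prop :=
  forall H : G -> Prop, is_subgroup H -> (forall a, A a -> H a) -> H x.

Definition generates (A : G -> Prop) : Prop := forall x, generated_by A x.

Definition cay_adj (S : G -> Prop) (x y : G) : Prop := exists s, S s /\ y = mul x s.

(* Colour of the edge {x, y} (with y = x s) is the set {s, s^-1} = {x^-1 y, y^-1 x}.
   [same_colour x y u v] : the colour sets of edges {x,y} and {u,v} coincide. *)
Definition same_colour (x y u v : G) : Prop :=
  mul (inv u) v = mul (inv x) y \/ mul (inv u) v = inv (mul (inv x) y).

Definition cay_aut (S : G -> Prop) (f : G -> G) : Prop :=
  bijective_map f /\ (forall x y, cay_adj S x y <-> cay_adj S (f x) (f y)).

Definition colour_preserving (S : G -> Prop) (f : G -> G) : Prop :=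
  cay_aut S f /\
  (forall x y, cay_adj S x y -> same_colour x y (f x) (f y)).

Definition colour_permuting (S : G -> Prop) (f : G -> G) : Prop :=
  cay_aut S f /\
  (forall x y u v, cay_adj S x y -> cay_adj S u v ->
     same_colour x y u v -> same_colour (f x) (f y) (f u) (f v)).

Definition group_aut (a : G -> G) : Prop :=
  bijective_map a /\ (forall x y, a (mul x y) = mul (a x) (a y)).

Definition affine (f : G -> G) : Prop :=
  exists a g, group_aut a /\ forall x, f x = a (mul g x).

Definition strongly_CCA (S : G -> Prop) : Prop :=
  forall f, colour_permuting S f -> affine f.

Definition S_star (S : G -> Prop) (s : G) : Prop :=
  S s /\
  forall f, colour_preserving S f -> f one = one -> f s = s -> forall x, f x = x.

End CayleyDefs.
Arguments is_group {G}.
Arguments inverse_closed {G}.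
Arguments generates {G}.
Arguments S_star {G}.
Arguments strongly_CCA {G}.

(* Main.v *)
Require Import Defs.
From Stdlib Require Import Classical.

Theorem lemma4p4 (G : Type) (mul : G -> G -> G) (one : G) (inv : G -> G)
  (hG : is_group mul one inv) (S : G -> Prop)
  (hS : inverse_closed inv S) (hS1 : ~ S one)
  (hgen : generates mul one inv (S_star mul one inv S)) :
  strongly_CCA mul inv S.
Proof.
  destruct hG as [assoc m1l m1r mVl mVr].
  assert (cancelL : forall x y, mul (inv x) (mul x y) = y).
  { intros x y. rewrite assoc, mVl, m1l. reflexivity. }
  assert (cancelR : forall x y, mul x (mul (inv x) y) = y).
  { intros x y. rewrite assoc, mVr, m1l. reflexivity. }
  assert (injL : forall x y z, mul x y = mul x z -> y = z).
  { intros x y z H. rewrite <- (cancelL x y), <- (cancelL x z), H. reflexivity. }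
  assert (inv_uniq : forall x y, mul x y = one -> y = inv x).
  { intros x y H. apply (injL x). rewrite H, mVr. reflexivity. }
  assert (inv_inv : forall x, inv (inv x) = x).
  { intros x. symmetry. apply inv_uniq. apply mVl. }
  assert (inv_mul : forall x y, inv (mul x y) = mul (inv y) (inv x)).
  { intros x y. symmetry. apply inv_uniq.
    rewrite <- assoc, (assoc y), mVr, m1l, mVr. reflexivity. }
  assert (inv1 : inv one = one).
  { symmetry. apply inv_uniq. apply m1l. }
  assert (transl : forall h x y, mul (inv (mul h x)) (mul h y) = mul (inv x) y).
  { intros h x y. rewrite inv_mul, <- assoc, cancelL. reflexivity. }
  assert (adj_iff : forall x y, cay_adj G mul S x y <-> S (mul (inv x) y)).
  { intros x y. split.
    - intros [s [Hs ->]]. rewrite cancelL. exact Hs.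
    - intros H. exists (mul (inv x) y). split; [exact H|]. rewrite cancelR. reflexivity. }

  assert (sc_transl : forall h x y u v,
    same_colour G mul inv (mul h x) (mul h y) (mul h u) (mul h v) <->
    same_colour G mul inv x y u v).
  { intros. unfold same_colour. rewrite !transl. tauto. }
  assert (LA : forall h, colour_preserving G mul inv S (fun x => mul h x)).
  { intros h. split; [split|].
    - exists (fun y => mul (inv h) y). split; intros; [apply cancelL|apply cancelR].
    - intros x y. rewrite !adj_iff, transl. tauto.
    - intros x y _. left. apply transl. }
  assert (compA : forall a b, colour_preserving G mul inv S a ->
            colour_preserving G mul inv S b ->
            colour_preserving G mul inv S (fun x => a (b x))).
  { intros a b [[[a' [Ha1 Ha2]] Haj] Hac] [[[b' [Hb1 Hb2]] Hbj] Hbc].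
    split; [split|].
    - exists (fun y => b' (a' y)). split; intros.
      + rewrite Ha1, Hb1. reflexivity.
      + rewrite Hb2, Ha2. reflexivity.
    - intros x y. rewrite (Hbj x y). apply Haj.
    - intros x y Hxy. unfold same_colour in *.
      assert (H1 := Hbc x y Hxy).
      assert (H2 := Hac (b x) (b y) (proj1 (Hbj x y) Hxy)).
      destruct H1 as [H1|H1]; destruct H2 as [H2|H2]; rewrite H2, H1.
      + left; reflexivity.
      + right; reflexivity.
      + right; reflexivity.
      + left; apply inv_inv. }
  assert (invA : forall a a', colour_preserving G mul inv S a ->
            (forall x, a' (a x) = x) -> (forall y, a (a' y) = y) ->
            colour_preserving G mul inv S a').
  { intros a a' [[_ Haj] Hac] H1 H2. split; [split|].
    - exists a. split; assumption.
    - intros x y. rewrite (Haj (a' x) (a' y)), !H2. tauto.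
    - intros x y Hxy.
      assert (Hxy' : cay_adj G mul S (a (a' x)) (a (a' y))) by (rewrite !H2; exact Hxy).
      apply Haj in Hxy'.
      assert (H := Hac _ _ Hxy'). rewrite !H2 in H. unfold same_colour in *.
      destruct H as [H|H]; rewrite H.
      + left; reflexivity.
      + right; rewrite inv_inv; reflexivity. }
  assert (dich : forall tau, colour_preserving G mul inv S tau -> tau one = one ->
            forall t, S t -> tau t = t \/ tau t = inv t).
  { intros tau [_ Hc] H1 t Ht.
    assert (Hadj : cay_adj G mul S one t) by (apply adj_iff; rewrite inv1, m1l; exact Ht).
    destruct (Hc _ _ Hadj) as [H|H]; rewrite H1, inv1, !m1l in H; auto. }
  assert (uniqA : forall t tau1 tau2, S_star mul one inv S t ->
            colour_preserving G mul inv S tau1 -> colour_preserving G mul inv S tau2 ->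
            tau1 one = one -> tau2 one = one -> tau1 t = tau2 t ->
            forall x, tau1 x = tau2 x).
  { intros t tau1 tau2 [Ht Hst] A1 A2 E1 E2 Et x.
    pose proof A2 as [[[t2' [H1 H2]] _] _].
    assert (A2' := invA _ _ A2 H1 H2).
    assert (Hc := compA _ _ A2' A1).
    assert (E : t2' (tau1 x) = x).
    { apply (Hst _ Hc).
      - rewrite E1. rewrite <- E2 at 1. rewrite H1. reflexivity.
      - rewrite Et, H1. reflexivity. }
    rewrite <- E at 2. rewrite H2. reflexivity. }

  intros f [[[f' [Hf'f Hff']] Hfadj] Hfcol].
  set (c := f one).
  set (phi := fun x => mul (inv c) (f x)).
  set (phi' := fun y => f' (mul c y)).
  assert (phi1 : phi one = one) by (unfold phi; apply mVl).
  assert (phi'phi : forall x, phi' (phi x) = x).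
  { intros x. unfold phi, phi'. rewrite cancelR. apply Hf'f. }
  assert (phiphi' : forall y, phi (phi' y) = y).
  { intros y. unfold phi, phi'. rewrite Hff'. apply cancelL. }
  assert (phi'1 : phi' one = one) by (rewrite <- phi1 at 1; apply phi'phi).
  assert (phiadj : forall x y, cay_adj G mul S x y <-> cay_adj G mul S (phi x) (phi y)).
  { intros x y. unfold phi. rewrite (Hfadj x y), !adj_iff, transl. tauto. }
  assert (phicol : forall x y u v, cay_adj G mul S x y -> cay_adj G mul S u v ->
            same_colour G mul inv x y u v ->
            same_colour G mul inv (phi x) (phi y) (phi u) (phi v)).
  { intros x y u v H1 H2 H3. unfold phi. apply sc_transl. apply Hfcol; assumption. }
  assert (phiinj : forall x y, phi x = phi y -> x = y).
  { intros x y H. rewrite <- (phi'phi x), H. apply phi'phi. }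
  assert (conjA : forall a, colour_preserving G mul inv S a ->
            colour_preserving G mul inv S (fun y => phi (a (phi' y)))).
  { intros a [[[a' [Ha1 Ha2]] Haj] Hac]. split; [split|].
    - exists (fun y => phi (a' (phi' y))). split; intros.
      + rewrite phi'phi, Ha1, phiphi'. reflexivity.
      + rewrite phi'phi, Ha2, phiphi'. reflexivity.
    - intros x y. rewrite <- phiadj, <- Haj.
      rewrite <- (phiphi' x) at 1. rewrite <- (phiphi' y) at 1. rewrite <- phiadj. tauto.
    - intros x y Hxy.
      assert (Hp : cay_adj G mul S (phi' x) (phi' y))
        by (apply phiadj; rewrite !phiphi'; exact Hxy).
      assert (Hq := proj1 (Haj _ _) Hp).
      assert (H := phicol _ _ _ _ Hp Hq (Hac _ _ Hp)).
      rewrite !phiphi' in H. exact H. }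

  assert (key : forall s, S_star mul one inv S s ->
            forall x, phi (mul s x) = mul (phi s) (phi x)).
  { intros s Hs. pose proof Hs as [HsS Hst].
    set (rho := fun y => mul (inv (phi s)) (phi (mul s (phi' y)))).
    assert (Arho : colour_preserving G mul inv S rho)
      by exact (compA _ _ (LA (inv (phi s))) (conjA _ (LA s))).
    assert (rho1 : rho one = one) by (unfold rho; rewrite phi'1, m1r; apply mVl).
    destruct (classic (forall y, rho y = y)) as [Hall|Hn].
    - intros x. specialize (Hall (phi x)). unfold rho in Hall.
      rewrite phi'phi in Hall. rewrite <- Hall. rewrite cancelR. reflexivity.
    - exfalso.
      assert (rhos : rho s <> s).
      { intros E. apply Hn. apply (Hst _ Arho rho1 E). }
      set (rho' := fun y => phi (rho (phi' y))).
      assert (Arho' : colour_preserving G mul inv S rho') by exact (conjA _ Arho).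
      assert (rho'1 : rho' one = one) by (unfold rho'; rewrite phi'1, rho1; exact phi1).
      assert (rho's : rho' s <> s).
      { intros E. apply Hn. intros y.
        assert (E2 := Hst _ Arho' rho'1 E (phi y)). unfold rho' in E2.
        rewrite phi'phi in E2. apply phiinj. exact E2. }
      assert (Hsi : S (inv s)) by (apply hS; exact HsS).
      assert (r1 : rho s = inv s) by (destruct (dich _ Arho rho1 s HsS); tauto).
      assert (r2 : rho' s = inv s) by (destruct (dich _ Arho' rho'1 s HsS); tauto).
      assert (Heq := uniqA _ _ _ Hs Arho Arho' rho1 rho'1 (eq_trans r1 (eq_sym r2))).
      assert (rinj : forall a b, rho a = rho b -> a = b).
      { destruct Arho as [[[r' [Hr1 Hr2]] _] _]. intros a b E.
        rewrite <- (Hr1 a), E. apply Hr1. }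
      assert (r3 : rho (inv s) = s).
      { destruct (dich _ Arho rho1 (inv s) Hsi) as [E|E].
        - exfalso. rewrite <- r1 in E. apply rinj in E. apply rhos.
          exact E.
        - rewrite E. apply inv_inv. }
      assert (E1 : rho (phi (inv s)) = phi s).
      { rewrite Heq. unfold rho'. rewrite phi'phi, r3. reflexivity. }
      assert (E2 : rho (phi (inv s)) = inv (phi s)).
      { unfold rho. rewrite phi'phi, mVr, phi1. apply m1r. }
      assert (E3 : phi (inv s) = phi s).
      { assert (Ha1 : cay_adj G mul S one s) by (apply adj_iff; rewrite inv1, m1l; exact HsS).
        assert (Ha2 : cay_adj G mul S one (inv s)) by (apply adj_iff; rewrite inv1, m1l; exact Hsi).
        assert (Hsc : same_colour G mul inv one s one (inv s))
          by (right; rewrite inv1, !m1l; reflexivity).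
        assert (H := phicol _ _ _ _ Ha1 Ha2 Hsc).
        unfold same_colour in H. rewrite phi1, inv1, !m1l in H.
        destruct H as [H|H]; rewrite H; [reflexivity|].
        rewrite <- E2, E1. reflexivity. }
      apply phiinj in E3. apply rhos. rewrite r1. exact E3. }

  set (Hsub := fun g => forall x, phi (mul g x) = mul (phi g) (phi x)).
  assert (Hsg : is_subgroup G mul one inv Hsub).
  { split; [|split].
    - intros x. rewrite m1l, phi1, m1l. reflexivity.
    - intros g h Hg Hh x. rewrite <- assoc, Hg, Hh, Hg, assoc. reflexivity.
    - intros g Hg.
      assert (Hi : forall x, phi (mul (inv g) x) = mul (inv (phi g)) (phi x)).
      { intros x. apply (injL (phi g)). rewrite <- Hg, cancelR, cancelR. reflexivity. }
      intros x. rewrite Hi. rewrite <- (m1r (inv g)), Hi, phi1, m1r. reflexivity. }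
  assert (Hall : forall g x, phi (mul g x) = mul (phi g) (phi x)).
  { intros g. exact (hgen g Hsub Hsg key). }
  exists phi, (phi' c). split.
  - split; [|exact Hall]. exists phi'. split; assumption.
  - intros x. rewrite Hall, phiphi'. unfold phi. rewrite cancelR. reflexivity.
Qed.
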